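(* Let $(a_m)_{m\ge1}$ be defined by $a_1=2$ and $a_{m+1}=a_m+1/a_m$. Then for every $m\ge1$ the lower bound $a_m\ge\sqrt{m+\sqrt{m(m+1)}}$ holds, and $$\frac{a_{m+1}}{a_m}\le\sqrt{\frac{m+1}{m}},$$ so the sequence $\big(a_m/\sqrt m\big)_{m\ge1}$ is non-increasing; moreover $\lim_{m\to\infty}a_m/\sqrt m=\sqrt2$.
   Context: $a_m$ is the right endpoint of the support $[-a_m,a_m]$ of the $m$-fold monotone convolution of the standard semicircle law $\frac1{2\pi}\sqrt{4-x^2}\mathbf 1_{[-2,2]}dx$. *)

(* Defs.v *)
From Stdlib Require Import Reals.
Open Scope R_scope.

(* a0 n = a_{n+1} in the paper's 1-based indexing *)
Fixpoint a0 (n : nat) : R :=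
  match n with
  | O => 2
  | S k => a0 k + / a0 k
  end.

(* a m = a_m for m >= 1 (a 0 is a junk value, never used) *)
Definition a (m : nat) : R := a0 (Nat.pred m).

(* Main.v *)
Require Import Defs.
From Stdlib Require Import Reals Lra Lia Psatz.
Open Scope R_scope.

Lemma a0_ge2 n : 2 <= a0 n.
Proof.
  induction n as [|n IH]; simpl; [lra|].
  assert (0 < / a0 n) by (apply Rinv_0_lt_compat; lra). lra.
Qed.

Definition d n := a0 n * a0 n.

Lemma d_S n : d (S n) = d n + 2 + / d n.
Proof.
  unfold d; simpl. pose proof (a0_ge2 n). field. lra.
Qed.

Lemma d_ge n : 2 * INR n + 4 <= d n.
Proof.
  induction n as [|n IH].
  - unfold d; simpl. lra.
  - rewrite d_S, S_INR. assert (0 < / d n) by (apply Rinv_0_lt_compat; pose proof (pos_INR n); lra). lra.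
Qed.

Lemma d_le n : d n <= 2 * INR n + 4 + sqrt (INR n).
Proof.
  induction n as [|n IH].
  - unfold d; simpl. rewrite sqrt_0. lra.
  - rewrite d_S, S_INR. pose proof (d_ge n). pose proof (pos_INR n).
    set (x := INR n) in *.
    assert (Hs : sqrt x + / (2*x+4) <= sqrt (x+1)).
    { pose proof (sqrt_pos x). pose proof (sqrt_pos (x+1)).
      pose proof (sqrt_sqrt x ltac:(lra)). pose proof (sqrt_sqrt (x+1) ltac:(lra)).
      assert (sqrt x <= sqrt (x+1)) by (apply sqrt_le_1; lra).
      assert (sqrt (x+1) <= x + 2) by nra.
      assert (1 <= sqrt (x+1)) by nra.
      assert (Hd: (sqrt (x+1) - sqrt x) * (sqrt (x+1) + sqrt x) = 1) by nra.
      assert (/ (2*x+4) <= sqrt (x+1) - sqrt x); [|lra].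
      apply Rmult_le_reg_r with (2*x+4); [lra|].
      rewrite Rinv_l by lra. nra. }
    assert (/ d n <= / (2*x+4)) by (apply Rinv_le_contravar; lra).
    lra.
Qed.

Definition c (m : R) := m + sqrt (m * (m+1)).

Lemma inv_c m : 1 <= m -> / c m = (sqrt (m*(m+1)) - m) / m.
Proof.
  intros Hm. unfold c. set (s := sqrt (m*(m+1))).
  assert (Hs2 : s*s = m*(m+1)) by (apply sqrt_sqrt; nra).
  assert (0 <= s) by apply sqrt_pos.
  assert (0 < m + s) by lra. field_simplify_eq; [nra|split; lra].
Qed.

Lemma c_step m : 1 <= m -> c (m+1) <= c m + 2 + / c m.
Proof.
  intros Hm. rewrite inv_c by lra. unfold c.
  set (s := sqrt (m*(m+1))). set (t := sqrt ((m+1)*(m+1+1))).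
  assert (Hs2 : s*s = m*(m+1)) by (apply sqrt_sqrt; nra).
  assert (Ht2 : t*t = (m+1)*(m+1+1)) by (apply sqrt_sqrt; nra).
  assert (0 <= s) by apply sqrt_pos. assert (0 <= t) by apply sqrt_pos.
  assert (Htm: t*m <= s*(m+1)).
  { apply Rsqr_incr_0_var; unfold Rsqr; [|nra].
    replace (t*m*(t*m)) with ((t*t)*(m*m)) by ring.
    replace (s*(m+1)*(s*(m+1))) with ((s*s)*((m+1)*(m+1))) by ring.
    rewrite Hs2, Ht2. nra. }
  apply Rmult_le_reg_r with m; [lra|].
  replace ((m + s + 2 + (s - m) / m) * m) with (m*m + s*m + m + s) by (field; lra).
  nra.
Qed.

Lemma c_ge1 m : 1 <= m -> 1 <= c m.
Proof. intros. unfold c. pose proof (sqrt_pos (m*(m+1))). lra. Qed.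

Lemma c_le_d k : c (INR (S k)) <= d k.
Proof.
  induction k as [|k IH].
  - unfold c, d; simpl. replace (1*(1+1)) with 2 by ring.
    assert (sqrt 2 <= 2). { rewrite <- (sqrt_square 2) at 2 by lra. apply sqrt_le_1; lra. }
    lra.
  - rewrite S_INR, d_S.
    assert (Hm : 1 <= INR (S k)) by (rewrite S_INR; pose proof (pos_INR k); lra).
    eapply Rle_trans; [apply c_step; exact Hm|].
    set (x := c (INR (S k))) in *. set (y := d k).
    assert (1 <= x) by (apply c_ge1; exact Hm).
    fold y in IH. assert (/ x - / y <= y - x); [|lra].
    replace (/x - /y) with ((y - x) / (x*y)).
    2:{ field. split; lra. }
    apply Rmult_le_reg_r with (x*y); [nra|].
    replace ((y - x) / (x * y) * (x * y)) with (y - x) by (field; repeat split; lra). assert (1 <= x*y) by nra. assert (0 <= y - x) by lra. nra.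
Qed.

Lemma lim_bound n : Rabs (a0 n / sqrt (INR n + 1) - sqrt 2) <= 3 / sqrt (INR n + 1).
Proof.
  pose proof (pos_INR n) as Hn.
  set (m := INR n + 1) in *.
  set (p := sqrt m).
  assert (Hp2 : p*p = m) by (apply sqrt_sqrt; unfold m; lra).
  assert (Hp0 : 0 <= p) by apply sqrt_pos.
  assert (Hm1 : 1 <= m) by (unfold m; lra).
  assert (Hp1 : 1 <= p) by nra.
  assert (Hsn : sqrt (INR n) <= p) by (apply sqrt_le_1; unfold m; lra).
  pose proof (d_ge n) as Hge. pose proof (d_le n) as Hle.
  pose proof (a0_ge2 n) as Ha.
  set (u := a0 n / p).
  assert (Hu : u * p = a0 n) by (unfold u; field; lra).
  assert (Hud : (u*u) * (p*p) = d n) by (unfold d; rewrite <- Hu; ring).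
  set (r := sqrt 2).
  assert (Hr2 : r*r = 2) by (apply sqrt_sqrt; lra).
  assert (Hr0 : 0 <= r) by apply sqrt_pos.
  assert (Hr1 : 1 <= r) by nra.
  set (w := 3 / p).
  assert (Hw : w * p = 3) by (unfold w; field; lra).
  assert (Hu0 : 0 <= u) by nra.
  assert (Huu : 2 <= u*u).
  { assert (2 * (p*p) <= (u*u)*(p*p)) by (rewrite Hud, Hp2; unfold m; lra). nra. }
  assert (Hur : r <= u) by nra.
  assert (Hup : (u*u - 2) * (p*p) <= 3 * p) by (rewrite Rmult_minus_distr_r, Hud, Hp2; unfold m in *; lra).
  assert (Hup' : u*u - 2 <= w).
  { apply Rmult_le_reg_r with p; [lra|]. rewrite Hw. nra. }
  rewrite Rabs_right by lra.
  nra.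
Qed.

Lemma part2 k : a (S (S k)) / a (S k) <= sqrt ((INR (S k) + 1) / INR (S k)).
Proof.
  unfold a; simpl Nat.pred.
  pose proof (a0_ge2 k). pose proof (c_le_d k) as Hcd.
  assert (Hm : 1 <= INR (S k)) by (rewrite S_INR; pose proof (pos_INR k); lra).
  set (m := INR (S k)) in *.
  replace (a0 (S k) / a0 k) with (1 + / d k) by (simpl; unfold d; field; lra).
  set (s := sqrt (m*(m+1))).
  assert (Hs2 : s*s = m*(m+1)) by (apply sqrt_sqrt; nra).
  assert (0 <= s) by apply sqrt_pos.
  assert (Hc : 1 <= c m) by (apply c_ge1; lra).
  assert (Hinv : / d k <= / c m) by (apply Rinv_le_contravar; lra).
  rewrite inv_c in Hinv by lra. fold s in Hinv.
  replace ((m+1)/m) with ((s/m)*(s/m)) by (field_simplify_eq; [nra|lra]).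
  rewrite sqrt_square.
  - replace (s/m) with (1 + (s-m)/m) by (field; lra). lra.
  - unfold Rdiv; apply Rmult_le_pos; [lra|]; left; apply Rinv_0_lt_compat; lra.
Qed.

Theorem mainTheorem11 :
  (forall m : nat, (1 <= m)%nat ->
     sqrt (INR m + sqrt (INR m * (INR m + 1))) <= a m) /\
  (forall m : nat, (1 <= m)%nat ->
     a (S m) / a m <= sqrt ((INR m + 1) / INR m)) /\
  (forall m : nat, (1 <= m)%nat ->
     a (S m) / sqrt (INR (S m)) <= a m / sqrt (INR m)) /\
  Un_cv (fun n : nat => a (S n) / sqrt (INR (S n))) (sqrt 2).
Proof.
  split; [|split; [|split]].
  - intros [|k] Hk; [lia|].
    unfold a; simpl Nat.pred. pose proof (a0_ge2 k).
    rewrite <- (sqrt_square (a0 k)) by lra. apply sqrt_le_1.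
    + pose proof (sqrt_pos (INR (S k) * (INR (S k) + 1))). pose proof (pos_INR (S k)). lra.
    + nra.
    + apply (c_le_d k).
  - intros [|k] Hk; [lia|]. apply part2.
  - intros [|k] Hk; [lia|].
    pose proof (part2 k) as H.
    assert (Hm : 1 <= INR (S k)) by (rewrite S_INR; pose proof (pos_INR k); lra).
    rewrite sqrt_div_alt in H by lra. rewrite (S_INR (S k)).
    assert (HA : 2 <= a (S k)) by apply a0_ge2.
    assert (HB : 2 <= a (S (S k))) by apply a0_ge2.
    set (A := a (S k)) in *. set (B := a (S (S k))) in *.
    set (p := sqrt (INR (S k))) in *. set (q := sqrt (INR (S k) + 1)) in *.
    assert (Hp : 0 < p) by (apply sqrt_lt_R0; lra).
    assert (Hq : 0 < q) by (apply sqrt_lt_R0; lra).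
    assert (H1 : B * p <= q * A).
    { apply (Rmult_le_compat_r (A*p)) in H; [|nra].
      replace (B / A * (A * p)) with (B*p) in H by (field; lra).
      replace (q / p * (A * p)) with (q*A) in H by (field; lra). exact H. }
    replace (B/q) with ((B*p) * / (q*p)) by (field; lra).
    replace (A/p) with ((q*A) * / (q*p)) by (field; lra).
    apply Rmult_le_compat_r; [left; apply Rinv_0_lt_compat; nra| exact H1].
  - intros eps Heps.
    destruct (archimed_cor1 (eps*eps/9)) as [N [HN HN0]].
    { apply Rmult_lt_0_compat; [nra|lra]. }
    exists N. intros n Hn. unfold Rdist, a. simpl Nat.pred. rewrite S_INR.
    eapply Rle_lt_trans; [apply lim_bound|].
    assert (HN1 : 1 <= INR N) by (apply (le_INR 1); lia).
    assert (HnN : INR N <= INR n) by (apply le_INR; lia).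
    set (p := sqrt (INR n + 1)).
    assert (Hp2 : p*p = INR n + 1) by (apply sqrt_sqrt; lra).
    assert (Hp0 : 0 <= p) by apply sqrt_pos.
    assert (Hpos : 0 < p) by nra.
    assert (HNe : 9 < eps*eps * INR N).
    { apply Rmult_lt_compat_r with (r := INR N) in HN; [|lra].
      rewrite Rinv_l in HN by lra. lra. }
    apply Rmult_lt_reg_r with p; [lra|].
    replace (3/p*p) with 3 by (field; lra).
    assert (9 < (eps*p)*(eps*p)) by nra.
    assert (0 < eps*p) by nra. destruct (Rlt_or_le 3 (eps*p)) as [|Hc]; [assumption|]. assert ((eps*p)*(eps*p) <= 3*3) by (apply Rmult_le_compat; lra). lra.
Qed.
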